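(* Let $T\in\mathbb{R}$, $\tau>0$, $\gamma>0$, and define $f_\tau:\mathbb{R}\to\mathbb{R}$ by $f_\tau(x)=0$ if $x-T<-\tau/2$, $f_\tau(x)=\frac1\tau(x-T)+\frac12$ if $-\tau/2\le x-T\le\tau/2$, and $f_\tau(x)=1$ if $x-T>\tau/2$. Let $g_E(x,x')=e^{\gamma|x-x'|}$. Then the $g_E$-smooth sensitivity of $f_\tau$, $B^*(x)=\sup_{z\in\mathbb{R}}\frac{\mathrm{L}_{f_\tau,\infty}(z)}{g_E(x,z)}$, satisfies $B^*(x)=\max\left(\frac{1}{|x-T|+\tau/2},\ \frac1\tau e^{-\gamma(|x-T|-\tau/2)}\right)$ if $|x-T|>\tau/2$, and $B^*(x)=\frac1\tau$ if $|x-T|\le\tau/2$.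
   Context: $\mathbb{R}$ carries the metric $|x-x'|$. For $x\in\mathbb{R}$, $\mathrm{L}_{f,\infty}(x)$ is the infimum of all $K$ such that $|f(x)-f(x')|\le K|x-x'|$ for all $x'\in\mathbb{R}$. *)

(* Defs.v *)
From HB Require Import structures.
From mathcomp Require Import all_boot all_order all_algebra.
From mathcomp Require Import all_classical all_reals all_analysis.
Set Implicit Arguments. Unset Strict Implicit. Unset Printing Implicit Defensive.
Import Order.TTheory GRing.Theory Num.Theory.
Import numFieldNormedType.Exports.
Local Open Scope classical_set_scope.
Local Open Scope ring_scope.

Definition ftau {R : realType} (T tau : R) (x : R) : R :=
  if x - T < - (tau / 2) then 0
  else if x - T <= tau / 2 then (x - T) / tau + 1 / 2
  else 1.

Definition local_lip {R : realType} (f : R -> R) (x : R) : \bar R :=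
  ereal_inf [set K%:E | K in [set K : R | forall x' : R,
                                   `|f x - f x'| <= K * `|x - x'|]].

Definition gE {R : realType} (gamma : R) (x x' : R) : R :=
  expR (gamma * `|x - x'|).

Definition smooth_sens {R : realType} (f : R -> R) (g : R -> R -> R) (x : R)
  : \bar R :=
  ereal_sup [set (local_lip f z * ((g x z)^-1)%:E)%E | z in [set: R]].

(* Main.v *)
Require Import Defs.
From HB Require Import structures.
From mathcomp Require Import all_boot all_order all_algebra.
From mathcomp Require Import all_classical all_reals all_analysis.
From mathcomp Require Import ring lra.
Import Order.TTheory GRing.Theory Num.Theory.
Import numFieldNormedType.Exports.
Local Open Scope classical_set_scope.
Local Open Scope ring_scope.

Definition G {R : realType} (h u : R) := if u < - h then 0 else if u <= h then u + h else h + h.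

Lemma G_lip {R : realType} (h a b : R) : 0 < h -> `|G h a - G h b| <= `|a - b|.
Proof.
move=> hp; have d1 := ler_norm (a - b); have d2 : b - a <= `|a - b| by rewrite distrC ler_norm.
rewrite /G ler_norml; case: (ltP a (-h)); case: (leP a h); case: (ltP b (-h)); case: (leP b h);
 move=> *; apply/andP; split; lra.
Qed.

Lemma G_hi {R : realType} (h a b : R) : 0 < h -> h < a -> `|G h a - G h b| * (a + h) <= (h+h) * `|a - b|.
Proof.
move=> hp ha; have d1 := ler_norm (a - b).
have e : (h + h) * (a - b) <= (h+h) * `|a - b| by rewrite ler_wpM2l //; lra.
have nn : 0 <= (h+h) * `|a - b| by apply: mulr_ge0 => //; lra.
rewrite /G; case: (ltP a (-h)); first lra. case: (leP a h); first lra. move=> _ _.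
case: (ltP b (-h)); case: (leP b h); move=> *.
all: first [rewrite subrr normr0 mul0r; nra | rewrite ger0_norm; [|nra]].
all: try nra.
all: have : 0 <= (a - h) * (b + h) by apply: mulr_ge0; lra.
all: nra.
Qed.

Lemma G_lo {R : realType} (h a b : R) : 0 < h -> a < - h -> `|G h a - G h b| * (- a + h) <= (h+h) * `|a - b|.
Proof.
move=> hp ha; have d1 : b - a <= `|a - b| by rewrite distrC ler_norm.
have e : (h + h) * (b - a) <= (h+h) * `|a - b| by rewrite ler_wpM2l //; lra.
have nn : 0 <= (h+h) * `|a - b| by apply: mulr_ge0 => //; lra.
rewrite /G; case: (ltP a (-h)); last lra. move=> _.
case: (ltP b (-h)); case: (leP b h); move=> *.
all: first [rewrite subrr normr0 mul0r; nra | rewrite ler0_norm; [|nra]].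
all: try nra.
all: have : 0 <= (h - b) * (- h - a) by apply: mulr_ge0; lra.
all: nra.
Qed.

Lemma ftauE {R : realType} (T tau x : R) : 0 < tau -> ftau T tau x = G (tau/2) (x - T) / tau.
Proof.
move=> tp; rewrite /ftau /G; case: ifP => _; first by rewrite mul0r.
case: ifP => _; field; lra.
Qed.

Definition Lf {R : realType} (h w : R) := if h < `|w| then (`|w| + h)^-1 else (h+h)^-1.

Lemma div_helper {R : realType} (x y c t : R) : 0 < c -> 0 < t -> x * c <= t * y -> x / t <= c^-1 * y.
Proof.
move=> cp tp H; rewrite -(ler_pM2r (mulr_gt0 cp tp)).
have -> : x / t * (c * t) = x * c by field; lra.
have -> : c^-1 * y * (c * t) = t * y by field; lra.
done.
Qed.

Lemma lip_ftau {R : realType} (T tau z : R) : 0 < tau ->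
  local_lip (ftau T tau) z = (Lf (tau/2) (z - T))%:E.
Proof.
move=> tp; set h := tau / 2.
have hp : 0 < h by rewrite /h; lra.
have tauE : tau = h + h by rewrite /h; lra.
have fE : forall x, ftau T tau x = G h (x - T) / tau by move=> x; rewrite ftauE.
apply/eqP; rewrite eq_le; apply/andP; split.
- apply: ereal_inf_lbound; exists (Lf h (z - T)) => // x'.
  rewrite !fE -mulrBl normrM (@ger0_norm _ tau^-1); last by rewrite invr_ge0 ltW.
  rewrite (_ : z - x' = (z - T) - (x' - T)); last by rewrite opprB addrA subrK.
  move: (z - T) (x' - T) => a b.
  rewrite /Lf; case: ifP => ha.
  + apply: div_helper => //; first by have := normr_ge0 a; lra.
    case: (ltP 0 a) => a0.
    * rewrite (gtr0_norm a0) tauE; apply: G_hi => //; rewrite -(gtr0_norm a0) //.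
    * rewrite (ler0_norm a0) tauE; apply: G_lo => //; rewrite (ler0_norm a0) in ha; lra.
  + rewrite tauE mulrC ler_wpM2l ?G_lip //; rewrite invr_ge0; lra.
- apply: le_ereal_inf_tmp => y [K HK <-]; rewrite lee_fin.
  have HK' : forall b, `|G h (z - T) - G h b| / tau <= K * `|(z - T) - b|.
    move=> b; have := HK (b + T); rewrite !fE -mulrBl normrM addrK.
    rewrite (@ger0_norm _ tau^-1); last by rewrite invr_ge0 ltW.
    by have -> : z - (b + T) = z - T - b by ring.
  move: (z - T) HK' => a HK'.
  have Gm : G h (-h) = 0.
    rewrite /G ltxx (_ : (-h <= h) = true) ?subrr //; lra.
  have Gp : G h h = h + h.
    rewrite /G lexx (_ : (h < -h) = false) //; apply/negbTE; rewrite -leNgt; lra.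
  rewrite /Lf; case: ifP => ha.
  + rewrite -[_^-1]mul1r ler_pdivrMr; last by have := normr_ge0 a; lra.
    case: (ltP 0 a) => a0.
    * have := HK' (-h); rewrite Gm (gtr0_norm a0).
      rewrite /G (_ : (a < -h) = false); last by apply/negbTE; rewrite -leNgt; lra.
      rewrite (_ : (a <= h) = false); last by apply/negbTE; rewrite -ltNge; rewrite (gtr0_norm a0) in ha.
      rewrite subr0 tauE ger0_norm ?divff //; try lra.
      by rewrite opprK ger0_norm //; lra.
    * have := HK' h; rewrite Gp (ler0_norm a0).
      rewrite (ler0_norm a0) in ha.
      rewrite /G (_ : (a < -h) = true); last by lra.
      rewrite sub0r normrN tauE ger0_norm ?divff //; try lra.
      by rewrite ler0_norm //; lra.
  + have ha' : `|a| <= h by rewrite leNgt ha.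
    case: (ltP 0 a) => a0.
    * have := HK' (-h); rewrite Gm subr0.
      rewrite (gtr0_norm a0) in ha'.
      rewrite /G (_ : (a < -h) = false); last by apply/negbTE; rewrite -leNgt; lra.
      rewrite (_ : (a <= h) = true); last by [].
      rewrite opprK (@ger0_norm _ (a + h)); last lra.
      rewrite -tauE -[tau^-1]mul1r => H; rewrite -(ler_pM2r (_ : 0 < a + h)); last lra.
      by rewrite mulrC.
    * have := HK' h; rewrite Gp.
      rewrite (ler0_norm a0) in ha'.
      rewrite /G (_ : (a < -h) = false); last by apply/negbTE; rewrite -leNgt; lra.
      rewrite (_ : (a <= h) = true); last by lra.
      rewrite (_ : a + h - (h + h) = - (h - a)); last by ring.
      rewrite normrN (@ger0_norm _ (h - a)); last lra.
      rewrite (@ler0_norm _ (a - h)); last lra.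
      rewrite opprB -tauE -[tau^-1]mul1r => H; rewrite -(ler_pM2r (_ : 0 < h - a)); last lra.
      by rewrite mulrC.
Qed.
Lemma core {R : realType} (h gamma s V : R) : 0 < h -> 0 < gamma -> h <= s -> s <= V ->
  (s + h)^-1 * expR (- (gamma * (V - s))) <=
  Num.max ((V + h)^-1) ((h + h)^-1 * expR (- (gamma * (V - h)))).
Proof.
move=> hp gp hs sV.
have shp : 0 < s + h by lra.
case: (leP 1 (gamma * (s + h))) => g1.
- rewrite le_max; apply/orP; left.
  rewrite expRN -invfM lef_pV2 ?posrE ?mulr_gt0 ?expR_gt0 //; last lra.
  have e := expR_ge1Dx (gamma * (V - s)).
  have : 0 <= (gamma * (s + h) - 1) * (V - s) by apply: mulr_ge0; lra.
  nra.
- rewrite le_max; apply/orP; right.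
  have -> : - (gamma * (V - s)) = - (gamma * (V - h)) + gamma * (s - h) by ring.
  rewrite expRD.
  set y := (h + h) / (s + h).
  have yE : y * (s + h) = h + h by rewrite /y; field; lra.
  have yp : 0 < y by rewrite /y divr_gt0 //; lra.
  have E1 : expR (gamma * (s - h)) <= (s + h) / (h + h).
    apply: (@le_trans _ _ (expR (1 - y))).
      rewrite ler_expR.
      have : 0 <= (1 - gamma * (s + h)) * (s - h) by apply: mulr_ge0; lra.
      nra.
    have -> : 1 - y = - (y - 1) by ring.
    rewrite expRN (_ : (s + h) / (h + h) = y^-1); last by rewrite /y invf_div.
    rewrite lef_pV2 ?posrE ?expR_gt0 //.
    by have := expR_ge1Dx (y - 1); lra.
  have E2 := expR_gt0 (- (gamma * (V - h))).
  set e1 := expR (gamma * (s - h)) in E1 *.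
  set e2 := expR (- (gamma * (V - h))) in E2 *.
  rewrite mulrCA [_ * e2]mulrC ler_pM2l //.
  rewrite -(ler_pM2r shp) mulrAC mulVf ?mul1r; last lra.
  rewrite -(ler_pM2r (_ : 0 < h + h)); last lra.
have -> : (h + h)^-1 * (s + h) * (h + h) = s + h by field; lra.
  by rewrite -ler_pdivlMr //; lra.
Qed.

Definition B {R : realType} (h tau gamma v : R) :=
  if h < `|v| then Num.max ((`|v| + h)^-1) (tau^-1 * expR (- (gamma * (`|v| - h))))
  else tau^-1.

Lemma bound {R : realType} (h tau gamma v w : R) : 0 < h -> 0 < gamma -> tau = h + h ->
  Lf h w * (expR (gamma * `|v - w|))^-1 <= B h tau gamma v.
Proof.
move=> hp gp ->.
have Ep : 0 < (expR (gamma * `|v - w|))^-1 by rewrite invr_gt0 expR_gt0.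
have E1 : (expR (gamma * `|v - w|))^-1 <= 1.
  by rewrite -expRN expR_le1 oppr_le0; apply: mulr_ge0; [lra|apply: normr_ge0].
have Ed : forall c, c <= `|v - w| -> (expR (gamma * `|v - w|))^-1 <= expR (- (gamma * c)).
  by move=> c hc; rewrite -expRN ler_expR lerN2 ler_pM2l.
have dv := lerB_dist v w.
have nw := normr_ge0 w.
have Lp : 0 <= Lf h w by rewrite /Lf; case: ifP => _; rewrite invr_ge0; lra.
have Lle : Lf h w <= (h + h)^-1.
  rewrite /Lf; case: ifP => hw //; rewrite lef_pV2 ?posrE; lra.
rewrite /B; case: ifP => hv; last first.
  by rewrite -[X in _ <= X]mulr1; apply: ler_pM.
case: (leP `|w| h) => hw.
- rewrite le_max; apply/orP; right.
  rewrite /Lf ltNge hw /=; rewrite ler_pM2l ?invr_gt0; last lra.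
  by apply: Ed; lra.
- rewrite /Lf hw.
  case: (leP `|v| `|w|) => vw.
  + rewrite le_max; apply/orP; left.
    rewrite -[X in _ <= X]mulr1; apply: ler_pM => //; first by rewrite invr_ge0; lra.
      by rewrite lef_pV2 ?posrE; lra.
  + apply: (le_trans _ (core _ _ _ _ hp gp (ltW hw) (ltW vw))).
    by rewrite ler_pM2l ?invr_gt0; [apply: Ed|lra].
Qed.

Theorem mainTheorem8 (R : realType) (T tau gamma : R)
  (htau : 0 < tau) (hgamma : 0 < gamma) (x : R) :
  smooth_sens (ftau T tau) (gE gamma) x =
  (if tau / 2 < `|x - T|
   then Num.max (1 / (`|x - T| + tau / 2))
                (1 / tau * expR (- (gamma * (`|x - T| - tau / 2))))
   else 1 / tau)%:E.
Proof.
have -> : (if tau / 2 < `|x - T|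
   then Num.max (1 / (`|x - T| + tau / 2))
                (1 / tau * expR (- (gamma * (`|x - T| - tau / 2))))
   else 1 / tau) = B (tau / 2) tau gamma (x - T) by rewrite /B !div1r.
set h := tau / 2.
have hp : 0 < h by rewrite /h; lra.
have tauE : tau = h + h by rewrite /h; lra.
have val : forall z, (local_lip (ftau T tau) z * ((gE gamma x z)^-1)%:E)%E
    = (Lf h (z - T) * (expR (gamma * `|(x - T) - (z - T)|))^-1)%:E.
  move=> z; rewrite lip_ftau // -EFinM /gE.
  by have -> : x - T - (z - T) = x - z by ring.
rewrite /smooth_sens; apply/eqP; rewrite eq_le; apply/andP; split.
- apply: ge_ereal_sup => y [z _ <-]; rewrite val lee_fin.
  exact: bound.
- set v := x - T.
  have att : forall z, ((Lf h (z - T) * (expR (gamma * `|v - (z - T)|))^-1)%:E <=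
      ereal_sup [set (local_lip (ftau T tau) z * ((gE gamma x z)^-1)%:E)%E | z in [set: R]])%E.
    by move=> z; apply: ereal_sup_ubound; exists z => //; rewrite val.
  have atx : ((Lf h v)%:E <= ereal_sup [set (local_lip (ftau T tau) z * ((gE gamma x z)^-1)%:E)%E | z in [set: R]])%E.
    by have := att x; rewrite -/v subrr normr0 mulr0 expR0 invr1 mulr1.
  rewrite /B; case: ifP => hv; last by move: atx; rewrite /Lf hv tauE.
  have atx' : (((`|v| + h)^-1)%:E <= ereal_sup [set (local_lip (ftau T tau) z * ((gE gamma x z)^-1)%:E)%E | z in [set: R]])%E.
    by move: atx; rewrite /Lf hv.
  have att2 : ((tau^-1 * expR (- (gamma * (`|v| - h))))%:E <= ereal_sup [set (local_lip (ftau T tau) z * ((gE gamma x z)^-1)%:E)%E | z in [set: R]])%E.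
    case: (ltP 0 v) => v0.
    + have := att (T + h); rewrite addrAC subrr add0r /Lf ltr_normr ltxx.
      rewrite (_ : (h < - h) = false) /=; last by apply/negbTE; rewrite -leNgt; lra.
      rewrite -expRN -tauE (gtr0_norm v0) ger0_norm //.
      rewrite (gtr0_norm v0) in hv; lra.
    + have := att (T - h); rewrite addrAC subrr add0r /Lf normrN (gtr0_norm hp) ltxx.
      rewrite -expRN -tauE (ler0_norm v0) ler0_norm; last first.
        rewrite (ler0_norm v0) in hv; lra.
      by have -> : - (v - - h) = - v - h by ring.
  case: (lerP ((`|v| + h)^-1) (tau^-1 * expR (- (gamma * (`|v| - h))))) => m.
  + exact: att2.
  + exact: atx'.
Qed.
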